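(* Let $\Gamma$ be a strict two-player normal-form game whose preference graph has no sink (no node of out-degree $0$) and no directed cycle of length $4$. Then each player has at least $3$ strategies. Moreover, if both players have exactly $3$ strategies, then the preference graph of $\Gamma$ is isomorphic (as a directed graph; equivalently, equal up to renaming strategies and players) to Shapley's graph. In particular, Shapley's graph is the unique smallest two-player preference graph with neither a sink nor a $4$-cycle.
   Context: A finite normal-form game has players $1,\dots,N$, finite strategy sets $S_1,\dots,S_N$ and utilities $u_i:\prod_j S_j\to\mathbb{R}$. A strategy profile is an element of $Z=\prod_j S_j$; write $(s;p_{-i})$ for the profile obtained from $p$ by replacing player $i$'s strategy with $s$. Two distinct profiles are $i$-comparable if they differ only in the strategy of player $i$. The preference graph has node set $Z$ and, for each pair of $i$-comparable profiles $p,q$, an arc $p\to q$ whenever $u_i(q)\ge u_i(p)$ (so ties produce arcs in both directions). A game is strict if $u_i(p)\neq u_i(q)$ for every player $i$ and every pair of $i$-comparable profiles $p,q$. Shapley's graph is the preference graph of the $3\times 3$ game with rows $r_1,r_2,r_3$ (player 1) and columns $c_1,c_2,c_3$ (player 2) and payoff pairs $(u_1,u_2)$: row $r_1$: $(0,0),(2,1),(1,2)$; row $r_2$: $(1,2),(0,0),(2,1)$; row $r_3$: $(2,1),(1,2),(0,0)$. Explicitly, player 1's preferences are $r_3>r_2>r_1$ against $c_1$, $r_1>r_3>r_2$ against $c_2$, $r_2>r_1>r_3$ against $c_3$; player 2's preferences are $c_3>c_2>c_1$ against $r_1$, $c_1>c_3>c_2$ against $r_2$, $c_2>c_1>c_3$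 against $r_3$ (an arc points to the more preferred profile). *)

(* Defs.v *)
From HB Require Import structures.
From mathcomp Require Import all_boot all_order all_algebra.
Set Implicit Arguments. Unset Strict Implicit. Unset Printing Implicit Defensive.
Import Order.TTheory GRing.Theory Num.Theory.
Local Open Scope ring_scope.

Section Game.
Variables (R : realDomainType) (S1 S2 : finType).
Variables (u1 u2 : S1 * S2 -> R).

Definition comparable1 (p q : S1 * S2) : bool := (p.2 == q.2) && (p.1 != q.1).
Definition comparable2 (p q : S1 * S2) : bool := (p.1 == q.1) && (p.2 != q.2).

Definition pref_graph : rel (S1 * S2) :=
  fun p q => (comparable1 p q && (u1 p <= u1 q))
          || (comparable2 p q && (u2 p <= u2 q)).

Definition strict_game : Prop :=
  (forall p q, comparable1 p q -> u1 p != u1 q) /\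
  (forall p q, comparable2 p q -> u2 p != u2 q).
End Game.

Definition no_sink (V : finType) (e : rel V) : Prop :=
  forall x : V, exists y : V, e x y.

Definition has_4cycle (V : finType) (e : rel V) : Prop :=
  exists a b c d : V,
    [&& uniq [:: a; b; c; d], e a b, e b c, e c d & e d a].

Definition digraph_iso (V W : finType) (e : rel V) (e' : rel W) : Prop :=
  exists f : V -> W, bijective f /\ forall x y, e x y = e' (f x) (f y).

(* Shapley's 3x3 game (rows r1,r2,r3 = 0,1,2 ; columns c1,c2,c3 = 0,1,2). *)
Definition shapley_u1 (p : 'I_3 * 'I_3) : int :=
  nth 0 (nth [::] [:: [:: 0; 2; 1]; [:: 1; 0; 2]; [:: 2; 1; 0]] p.1) p.2.
Definition shapley_u2 (p : 'I_3 * 'I_3) : int :=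
  nth 0 (nth [::] [:: [:: 0; 1; 2]; [:: 2; 0; 1]; [:: 1; 2; 0]] p.1) p.2.

Definition shapley_graph : rel ('I_3 * 'I_3) := pref_graph shapley_u1 shapley_u2.

(* Main.v *)
Require Import Defs.
From HB Require Import structures.
From mathcomp Require Import all_boot all_order all_algebra.
Import Order.TTheory GRing.Theory Num.Theory.
Local Open Scope ring_scope.

Definition o0 : 'I_3 := @Ordinal 3 0 isT.
Definition o1 : 'I_3 := @Ordinal 3 1 isT.
Definition o2 : 'I_3 := @Ordinal 3 2 isT.
Definition allv : seq ('I_3 * 'I_3) :=
  [seq (i, j) | i <- [:: o0; o1; o2], j <- [:: o0; o1; o2]].
Lemma memall a : a \in allv.
Proof. by case: a => -[[|[|[|i]]] Hi] -[[|[|[|j]]] Hj]. Qed.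

Lemma ord3 (i : 'I_3) : [|| i == o0, i == o1 | i == o2].
Proof. by case: i => -[|[|[|i]]] Hi. Qed.

Lemma shap_facts : strict_game shapley_u1 shapley_u2 /\ no_sink shapley_graph
       /\ ~ has_4cycle shapley_graph.
Proof.
have H1 : all (fun p => all (fun q => comparable1 p q ==> (shapley_u1 p != shapley_u1 q)) allv) allv by vm_compute.
have H2 : all (fun p => all (fun q => comparable2 p q ==> (shapley_u2 p != shapley_u2 q)) allv) allv by vm_compute.
have H3 : all (fun x => has (fun y => shapley_graph x y) allv) allv by vm_compute.
have H4 : ~~ has (fun a => has (fun b => has (fun c => has (fun d =>
   [&& uniq [:: a; b; c; d], shapley_graph a b, shapley_graph b c, shapley_graph c d & shapley_graph d a]) allv) allv) allv) allv by vm_compute.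
split; [split|split].
- move=> p q; move/allP: H1 => /(_ p (memall p))/allP/(_ q (memall q))/implyP; exact.
- move=> p q; move/allP: H2 => /(_ p (memall p))/allP/(_ q (memall q))/implyP; exact.
- move=> x; move/allP: H3 => /(_ x (memall x))/hasP[y _ Hy]; by exists y.
move=> [a [b [c [d Habcd]]]]; move/negP: H4; apply.
apply/hasP; exists a; first exact: memall.
apply/hasP; exists b; first exact: memall.
apply/hasP; exists c; first exact: memall.
apply/hasP; exists d; first exact: memall.
exact: Habcd.
Qed.

Lemma exmax (R : realDomainType) (T : finType) (f : T -> R) (t0 : T) :
  exists x, forall y, f y <= f x.
Proof.
case: (@arg_maxP _ _ T t0 xpredT f isT) => x _ H. by exists x => y; apply: H.
Qed.

Lemma uniq_card (T : finType) (s : seq T) : uniq s -> (size s <= #|T|)%N.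
Proof. by move/card_uniqP => <-; exact: max_card. Qed.

Lemma card3 (T : finType) (x y z : T) :
  y != x -> z != y -> z != x -> (3 <= #|T|)%N.
Proof.
move=> hyx hzy hzx.
have hxy : x != y by rewrite eq_sym.
have hxz : x != z by rewrite eq_sym.
have hyz : y != z by rewrite eq_sym.
have U : uniq [:: x; y; z] by rewrite /= !inE !negb_or hxy hxz hyz.
by have := @uniq_card _ _ U.
Qed.

Lemma three (T : finType) (x y z : T) : #|T| = 3%N ->
  y != x -> z != y -> z != x -> forall w, [|| w == x, w == y | w == z].
Proof.
move=> HT hyx hzy hzx w; apply/negPn/negP; rewrite !negb_or => /and3P[hwx hwy hwz].
have hxy : x != y by rewrite eq_sym.
have hxz : x != z by rewrite eq_sym.
have hyz : y != z by rewrite eq_sym.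
have U : uniq [:: x; y; z; w].
  by rewrite /= !inE !negb_or hxy hxz hyz ![_ == w]eq_sym hwx hwy hwz.
by have := @uniq_card _ _ U; rewrite HT.
Qed.

Theorem mainTheorem1 (R : realDomainType) (S1 S2 : finType)
    (u1 u2 : S1 * S2 -> R)
    (hS1 : (0 < #|S1|)%N) (hS2 : (0 < #|S2|)%N)
    (hstrict : strict_game u1 u2)
    (hsink : no_sink (pref_graph u1 u2))
    (hcyc : ~ has_4cycle (pref_graph u1 u2)) :
  [/\ (3 <= #|S1|)%N, (3 <= #|S2|)%N,
      (#|S1| = 3%N -> #|S2| = 3%N ->
         digraph_iso (pref_graph u1 u2) shapley_graph)
    & (strict_game shapley_u1 shapley_u2 /\ no_sink shapley_graph
       /\ ~ has_4cycle shapley_graph)].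
Proof.
have [hs1 hs2] := hstrict.
case/card_gt0P: hS1 => rr _.
case/card_gt0P: hS2 => c0 _.
pose B1 r c := forall r0, u1 (r0, c) <= u1 (r, c).
pose B2 c r := forall c0, u2 (r, c0) <= u2 (r, c).
have exB1 c : exists r, B1 r c by exact: (@exmax R S1 (fun r => u1 (r, c)) rr).
have exB2 r : exists c, B2 c r by exact: (@exmax R S2 (fun c => u2 (r, c)) c0).
have st1 r c r0 : B1 r c -> r0 != r -> u1 (r0, c) < u1 (r, c).
  move=> Hb ne; rewrite lt_def Hb andbT; apply: hs1.
  by rewrite /comparable1 /= eqxx /= eq_sym.
have st2 c r c0' : B2 c r -> c0' != c -> u2 (r, c0') < u2 (r, c).
  move=> Hb ne; rewrite lt_def Hb andbT; apply: hs2.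
  by rewrite /comparable2 /= eqxx /= eq_sym.
have NS1 r c c' : B1 r c -> B2 c' r -> c' != c.
  move=> b1 b2; apply/eqP => E; subst c'.
  case: (hsink (r, c)) => -[r2 c2].
  rewrite /pref_graph /comparable1 /comparable2 /=.
  case/orP => /andP[/andP[E ne] le].
  - move: le; rewrite -(eqP E).
    have ne' : r2 != r by rewrite eq_sym.
    by rewrite leNgt (st1 r c r2 b1 ne').
  - move: le; rewrite -(eqP E).
    have ne' : c2 != c by rewrite eq_sym.
    by rewrite leNgt (st2 c r c2 b2 ne').
have NS2 r c r' : B2 c r -> B1 r' c -> r' != r.
  move=> b2 b1; apply/eqP => E; subst r'.
  case: (hsink (r, c)) => -[r2 c2].
  rewrite /pref_graph /comparable1 /comparable2 /=.
  case/orP => /andP[/andP[E ne] le].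
  - move: le; rewrite -(eqP E).
    have ne' : r2 != r by rewrite eq_sym.
    by rewrite leNgt (st1 r c r2 b1 ne').
  - move: le; rewrite -(eqP E).
    have ne' : c2 != c by rewrite eq_sym.
    by rewrite leNgt (st2 c r c2 b2 ne').
have arc1 r r' c : r != r' -> u1 (r, c) <= u1 (r', c) ->
    pref_graph u1 u2 (r, c) (r', c).
  by move=> ne le; rewrite /pref_graph /comparable1 /= eqxx ne le.
have arc2 r c c' : c != c' -> u2 (r, c) <= u2 (r, c') ->
    pref_graph u1 u2 (r, c) (r, c').
  by move=> ne le; rewrite /pref_graph /comparable2 /= eqxx ne le orbT.
have cyc r r' c c' : r != r' -> c != c' ->
    pref_graph u1 u2 (r', c) (r, c) -> pref_graph u1 u2 (r, c) (r, c') ->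
    pref_graph u1 u2 (r, c') (r', c') -> pref_graph u1 u2 (r', c') (r', c) ->
    False.
  move=> nr nc A1 A2 A3 A4; apply: hcyc.
  exists (r', c), (r, c), (r, c'), (r', c').
  have nr' : r' != r by rewrite eq_sym.
  have nc' : c' != c by rewrite eq_sym.
  rewrite A1 A2 A3 A4 /= !inE !xpair_eqE ?(negbTE nr) ?(negbTE nr')
     ?(negbTE nc) ?(negbTE nc') ?eqxx.
  done.
have L1 r c c' r' : B1 r c -> B2 c' r -> B1 r' c' -> u2 (r', c) < u2 (r', c').
  move=> b1 b2 b3.
  have ncc := NS1 _ _ _ b1 b2.
  have nrr := NS2 _ _ _ b2 b3.
  rewrite ltNge; apply/negP => le.
  apply: (cyc r r' c c'); first by rewrite eq_sym.
  - by rewrite eq_sym.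
  - exact: arc1.
  - apply: arc2 => //; by rewrite eq_sym.
  - apply: arc1 => //; by rewrite eq_sym.
  - exact: arc2.
have L2 r c r' c' : B2 c r -> B1 r' c -> B2 c' r' -> u1 (r, c') < u1 (r', c').
  move=> b1 b2 b3.
  have ncc := NS1 _ _ _ b2 b3.
  have nrr := NS2 _ _ _ b1 b2.
  rewrite ltNge; apply/negP => le.
  apply: (cyc r r' c' c); first by rewrite eq_sym.
  - done.
  - exact: arc1.
  - apply: arc2 => //; by rewrite eq_sym.
  - apply: arc1 => //; by rewrite eq_sym.
  - by apply: arc2 => //; rewrite eq_sym.

have [r0 b_r0] := exB1 c0.
have [c1 b_c1] := exB2 r0.
have [r1 b_r1] := exB1 c1.
have [c2 b_c2] := exB2 r1.
have [r2 b_r2] := exB1 c2.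
have [c3 b_c3] := exB2 r2.
have [r3 b_r3] := exB1 c3.
have [c4 b_c4] := exB2 r3.
have n10 : r1 != r0 := NS2 _ _ _ b_c1 b_r1.
have n21 : r2 != r1 := NS2 _ _ _ b_c2 b_r2.
have n20 : r2 != r0.
  have h := L1 _ _ _ _ b_r1 b_c2 b_r2.
  by apply/eqP => E; move: h; rewrite E ltNge (b_c1 c2).
have m10 : c1 != c0 := NS1 _ _ _ b_r0 b_c1.
have m21 : c2 != c1 := NS1 _ _ _ b_r1 b_c2.
have m20 : c2 != c0.
  have h := L1 _ _ _ _ b_r0 b_c1 b_r1.
  by apply/eqP => E; move: h; rewrite -E ltNge (b_c2 c1).
apply: And4.
- exact: (@card3 _ _ _ _ n10 n21 n20).
- exact: (@card3 _ _ _ _ m10 m21 m20).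
- move=> H1 H2.
  have Hr := @three _ _ _ _ H1 n10 n21 n20.
  have Hc := @three _ _ _ _ H2 m10 m21 m20.
  have uB1 r r' c : B1 r c -> B1 r' c -> r' = r.
    move=> b b'; case: (eqVneq r' r) => // ne.
    by have := st1 r c r' b ne; rewrite ltNge (b' r).
  have uB2 c c' r : B2 c r -> B2 c' r -> c' = c.
    move=> b b'; case: (eqVneq c' c) => // ne.
    by have := st2 c r c' b ne; rewrite ltNge (b' c).
  have E3 : c3 = c0.
    have k1 : c3 != c2 := NS1 _ _ _ b_r2 b_c3.
    have k2 : c3 != c1.
      have h := L1 _ _ _ _ b_r1 b_c2 b_r2.
      by apply/eqP => E; move: h; rewrite -E ltNge (b_c3 c2).
    by case/or3P: (Hc c3) => /eqP E //; [move: k2 | move: k1]; rewrite E eqxx.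
  subst c3.
  have E3 := uB1 _ _ _ b_r0 b_r3; subst r3.
  have E4 := uB2 _ _ _ b_c1 b_c4; subst c4.
  have M1 := L2 _ _ _ _ b_c2 b_r2 b_c3.
  have M2 := L2 _ _ _ _ b_c3 b_r0 b_c1.
  have M3 := L2 _ _ _ _ b_c1 b_r1 b_c2.
  have N1 := L1 _ _ _ _ b_r2 b_c3 b_r0.
  have N2 := L1 _ _ _ _ b_r0 b_c1 b_r1.
  have N3 := L1 _ _ _ _ b_r1 b_c2 b_r2.
  have n01 : r0 != r1 by rewrite eq_sym.
  have n12 : r1 != r2 by rewrite eq_sym.
  have n02 : r0 != r2 by rewrite eq_sym.
  have m01 : c0 != c1 by rewrite eq_sym.
  have m12 : c1 != c2 by rewrite eq_sym.
  have m02 : c0 != c2 by rewrite eq_sym.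
  have P1 := st1 _ _ _ b_r0 n10.
  have P2 := st1 _ _ _ b_r0 n20.
  have P3 := st1 _ _ _ b_r1 n01.
  have P4 := st1 _ _ _ b_r1 n21.
  have P5 := st1 _ _ _ b_r2 n02.
  have P6 := st1 _ _ _ b_r2 n12.
  have Q1 := st2 _ _ _ b_c1 m01.
  have Q2 := st2 _ _ _ b_c1 m21.
  have Q3 := st2 _ _ _ b_c2 m02.
  have Q4 := st2 _ _ _ b_c2 m12.
  have Q5 := st2 _ _ _ b_c3 m10.
  have Q6 := st2 _ _ _ b_c3 m20.
  pose rho r := if r == r0 then o2 else if r == r1 then o0 else o1.
  pose sig c := if c == c0 then o0 else if c == c1 then o1 else o2.
  pose rhoi (i : 'I_3) := if i == o2 then r0 else if i == o0 then r1 else r2.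
  pose sigi (i : 'I_3) := if i == o0 then c0 else if i == o1 then c1 else c2.
  have rho0 : rho r0 = o2 by rewrite /rho eqxx.
  have rho1 : rho r1 = o0 by rewrite /rho (negbTE n10) eqxx.
  have rho2 : rho r2 = o1 by rewrite /rho (negbTE n20) (negbTE n21).
  have sig0 : sig c0 = o0 by rewrite /sig eqxx.
  have sig1 : sig c1 = o1 by rewrite /sig (negbTE m10) eqxx.
  have sig2 : sig c2 = o2 by rewrite /sig (negbTE m20) (negbTE m21).
  have rhoi0 : rhoi o0 = r1 by [].
  have rhoi1 : rhoi o1 = r2 by [].
  have rhoi2 : rhoi o2 = r0 by [].
  have sigi0 : sigi o0 = c0 by [].
  have sigi1 : sigi o1 = c1 by [].
  have sigi2 : sigi o2 = c2 by [].
  exists (fun x => (rho x.1, sig x.2)); split.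
    exists (fun y => (rhoi y.1, sigi y.2)).
    - move=> [a b] /=.
      by case/or3P: (Hr a) => /eqP->; case/or3P: (Hc b) => /eqP->;
        rewrite ?rho0 ?rho1 ?rho2 ?sig0 ?sig1 ?sig2 ?rhoi0 ?rhoi1 ?rhoi2 ?sigi0 ?sigi1 ?sigi2.
    - move=> [a b] /=.
      by case/or3P: (ord3 a) => /eqP->; case/or3P: (ord3 b) => /eqP->;
        rewrite ?rho0 ?rho1 ?rho2 ?sig0 ?sig1 ?sig2 ?rhoi0 ?rhoi1 ?rhoi2 ?sigi0 ?sigi1 ?sigi2.
  move=> [a b] [a' b'] /=.
  case/or3P: (Hr a) => /eqP->; case/or3P: (Hc b) => /eqP->;
  case/or3P: (Hr a') => /eqP->; case/or3P: (Hc b') => /eqP->;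
  rewrite ?rho0 ?rho1 ?rho2 ?sig0 ?sig1 ?sig2;
  rewrite /pref_graph /comparable1 /comparable2 /= ?eqxx
    ?(negbTE n10) ?(negbTE n21) ?(negbTE n20) ?(negbTE n01) ?(negbTE n12) ?(negbTE n02)
    ?(negbTE m10) ?(negbTE m21) ?(negbTE m20) ?(negbTE m01) ?(negbTE m12) ?(negbTE m02)
    ?(ltW M1) ?(ltW M2) ?(ltW M3) ?(ltW N1) ?(ltW N2) ?(ltW N3)
    ?(lt_geF M1) ?(lt_geF M2) ?(lt_geF M3) ?(lt_geF N1) ?(lt_geF N2) ?(lt_geF N3)
    ?(ltW P1) ?(ltW P2) ?(ltW P3) ?(ltW P4) ?(ltW P5) ?(ltW P6)
    ?(lt_geF P1) ?(lt_geF P2) ?(lt_geF P3) ?(lt_geF P4) ?(lt_geF P5) ?(lt_geF P6)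
    ?(ltW Q1) ?(ltW Q2) ?(ltW Q3) ?(ltW Q4) ?(ltW Q5) ?(ltW Q6)
    ?(lt_geF Q1) ?(lt_geF Q2) ?(lt_geF Q3) ?(lt_geF Q4) ?(lt_geF Q5) ?(lt_geF Q6);
  vm_compute; reflexivity.
- exact: shap_facts.
Qed.
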